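(* Consider Algorithm 1 with $x_0=0$, run on arbitrary vectors $g_t$ and non-negative learning rates $\eta_t$. For any $t\ge1$ and any $x^*\in\mathbb{R}^d$ there exists a number $\tilde x_t$ between $\|x^*\|$ and $\|x_t\|$ such that $$\frac{\|x^*-x_t\|^2}{S_{t-1}+2}\min\Big\{1,\frac1{\tilde x_t}\Big\}\le B_{\phi_t}(x^*,x_t)\le2\|x^*-x_t\|^2(S_{t-1}^2+Q_{t-1})\exp(Q_{t-1}),$$ with the convention $\min\{1,1/0\}=1$.
   Context: $\|\cdot\|$ is the Euclidean norm. For differentiable $f$, $B_f(x,y)=f(x)-f(y)-\langle\nabla f(y),x-y\rangle$. Auxiliary functions: $\psi^*(\theta,S,Q)=\exp\big(\max_{\beta\in[-1/2,1/2]}(\theta\beta-\beta^2S^2)-Q\big)$ for $\theta\in\mathbb{R},S>0,Q\ge0$; $\psi(x,S,Q)=\sup_{\theta\in\mathbb{R}}(\theta x-\psi^*(\theta,S,Q))$. Algorithm 1 with $x_0=0$: $S_0^2=4$, $Q_0=0$, $\theta_0=0$. For $t=1,2,\dots$: $\phi_t(x)=\psi(\|x\|,S_{t-1},Q_{t-1})$; $x_t$ is the unique minimizer of $\phi_t(x)-\langle\theta_{t-1},x\rangle$; receive $g_t$; $\ell_t=\eta_tg_t$, $S_t^2=S_{t-1}^2+\|\ell_t\|^2$ ($S_t>0$), $Q_t=Q_{t-1}+\|\ell_t\|^2/S_t^2$, $\theta_t=\theta_{t-1}-\ell_t$. *)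

(* Defs.v *)
From HB Require Import structures.
From mathcomp Require Import all_boot all_order all_algebra.
From mathcomp Require Import all_classical all_reals all_analysis.
Set Implicit Arguments. Unset Strict Implicit. Unset Printing Implicit Defensive.
Import Order.TTheory GRing.Theory Num.Theory.
Import numFieldNormedType.Exports.
Local Open Scope classical_set_scope.
Local Open Scope ring_scope.

Section Defs.
Variable R : realType.

Definition dotv (d : nat) (u v : 'rV[R]_d) : R := \sum_(i < d) u ord0 i * v ord0 i.
Definition enorm (d : nat) (u : 'rV[R]_d) : R := Num.sqrt (dotv u u).

(* Bregman divergence B_f(x,y) = f x - f y - <grad f(y), x - y>,
   the linear term written as the (Frechet) differential of f at y applied to x - y *)
Definition bregman (d : nat) (f : 'rV[R]_d -> R^o) (x y : 'rV[R]_d) : R :=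
  f x - f y - 'd f y (x - y).

Definition psistar (theta S Q : R) : R :=
  expR (sup [set theta * b - b ^+ 2 * S ^+ 2 | b in [set b : R | -(1/2) <= b <= 1/2]] - Q).

Definition psi (x S Q : R) : R :=
  sup [set theta * x - psistar theta S Q | theta in [set: R]].

(* Algorithm 1 state; g t and eta t are used for t >= 1 (index 0 unused). *)
Fixpoint Ssq (d : nat) (g : nat -> 'rV[R]_d) (eta : nat -> R) (t : nat) : R :=
  match t with
  | 0 => 4
  | s.+1 => Ssq g eta s + enorm (eta s.+1 *: g s.+1) ^+ 2
  end.

Definition Sv (d : nat) (g : nat -> 'rV[R]_d) (eta : nat -> R) (t : nat) : R :=
  Num.sqrt (Ssq g eta t).

Fixpoint Qv (d : nat) (g : nat -> 'rV[R]_d) (eta : nat -> R) (t : nat) : R :=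
  match t with
  | 0 => 0
  | s.+1 => Qv g eta s + enorm (eta s.+1 *: g s.+1) ^+ 2 / Ssq g eta s.+1
  end.

Fixpoint thetav (d : nat) (g : nat -> 'rV[R]_d) (eta : nat -> R) (t : nat) : 'rV[R]_d :=
  match t with
  | 0 => 0
  | s.+1 => thetav g eta s - eta s.+1 *: g s.+1
  end.

Definition phi (d : nat) (g : nat -> 'rV[R]_d) (eta : nat -> R) (t : nat)
  (x : 'rV[R]_d) : R^o :=
  psi (enorm x) (Sv g eta t.-1) (Qv g eta t.-1).

Definition min1inv (x : R) : R := if x == 0 then 1 else Num.min 1 x^-1.

End Defs.

(* Main.v *)
Require Import Defs.
From HB Require Import structures.
From mathcomp Require Import all_boot all_order all_algebra.
From mathcomp Require Import all_classical all_reals all_analysis.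
From mathcomp Require Import ring lra.
Import Order.TTheory GRing.Theory Num.Theory.
Import numFieldNormedType.Exports.
Local Open Scope ring_scope.

Lemma sup_eq_max (R : realType) (E : set R) m :
  E m -> (forall y, E y -> y <= m) -> sup E = m.
Proof.
move=> Em ub; apply/le_anti/andP; split.
  by apply: ge_sup; [exists m | exact: ub].
by apply: ub_le_sup => //; exists m.
Qed.

Lemma mymaxl (R : realType) (x y : R) : x <= Num.max x y.
Proof. by rewrite le_max lexx. Qed.
Lemma mymaxr (R : realType) (x y : R) : y <= Num.max x y.
Proof. by rewrite le_max lexx orbT. Qed.

Section OneD.
Variables (R : realType) (a Q : R).
Hypotheses (ha : 4 <= a) (hQ : 0 <= Q).

Definition H (u : R) := if u <= a then u ^+ 2 / (4 * a) else u / 2 - a / 4.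
Definition H' (u : R) := if u <= a then u / (2 * a) else 1 / 2.
Definition cc := expR (- Q).
Definition gg u := cc * expR (H u) * H' u.

Ltac hy := have ? := ha; have ? := hQ.
Lemma a_gt0 : 0 < a. Proof. hy; lra. Qed.

Lemma H_ge0 u : 0 <= u -> 0 <= H u.
Proof.
hy; rewrite /H => u0; case: ifP => ua; first by rewrite divr_ge0 ?sqr_ge0 //; lra.
move/negbT: ua; rewrite -ltNge => ua; lra.
Qed.

Lemma H'_ge0 u : 0 <= u -> 0 <= H' u.
Proof. hy; rewrite /H' => u0; case: ifP => _; last lra. by rewrite divr_ge0 //; lra. Qed.

Lemma psistar_eq th : psistar th (Num.sqrt a) Q = cc * expR (H `|th|).
Proof.
hy; rewrite /psistar /cc sqr_sqrtr; last lra.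
rewrite -expRD addrC; congr expR; congr (_ + _).
have a0 := a_gt0.
apply: sup_eq_max.
- rewrite /H; case: ifPn => tha.
    exists (th / (2 * a)) => /=.
      rewrite ler_norml in tha; case/andP: tha => t1 t2.
      apply/andP; split.
        by rewrite ler_pdivlMr; lra.
      by rewrite ler_pdivrMr; lra.
    rewrite real_normK ?num_real //.
    field; lra.
  rewrite -ltNge in tha.
  have [th0|th0] := lerP 0 th.
    rewrite ger0_norm // in tha *.
    exists (1/2) => /=; first by apply/andP; split; lra.
    field; lra.
  rewrite ltr0_norm // in tha *.
  exists (-(1/2)) => /=; first by apply/andP; split; lra.
  field; lra.
- move=> y [b /andP [b1 b2] <-].
  rewrite /H; case: ifPn => tha.
    rewrite real_normK ?num_real //.
    rewrite ler_pdivlMr; last lra.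
    have := sqr_ge0 (2*a*b - th); nra.
  rewrite -ltNge in tha.
  have [th0|th0] := lerP 0 th.
    rewrite ger0_norm // in tha *.
    have h1 : 0 <= th - a * (b + 1/2) by nra.
    have h2 : 0 <= 1/2 - b by lra.
    have := mulr_ge0 h2 h1; nra.
  rewrite ltr0_norm // in tha *.
  have h1 : 0 <= - th - a * (1/2 - b) by nra.
  have h2 : 0 <= b + 1/2 by lra.
  have := mulr_ge0 h2 h1; nra.
Qed.

Lemma H_tangent u v : 0 <= u -> 0 <= v -> H u + H' u * (v - u) <= H v.
Proof.
hy; move=> u0 v0; have a0 := a_gt0.
rewrite /H /H'; case: ifPn => ua; case: ifPn => va; rewrite ?ltNge -?ltNge in ua va.
- rewrite -subr_ge0.
  have -> : v ^+ 2 / (4 * a) - (u ^+ 2 / (4 * a) + u / (2 * a) * (v - u))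
     = (v - u) ^+ 2 / (4 * a) by field; lra.
  by rewrite divr_ge0 ?sqr_ge0 //; lra.
- have e1 : u ^+ 2 / (4 * a) + u / (2 * a) * (v - u) = (2 * u * v - u ^+ 2) / (4 * a) by field; lra.
  rewrite e1 ler_pdivrMr; last lra.
  have := mulr_ge0 (_ : 0 <= a - u) (_ : 0 <= v - a); nra.
- have e1 : v ^+ 2 / (4 * a) = (v / 2 - a / 4) + (v - a) ^+ 2 / (4 * a) by field; lra.
  rewrite e1; have : 0 <= (v - a) ^+ 2 / (4 * a) by rewrite divr_ge0 ?sqr_ge0 //; lra.
  lra.
- lra.
Qed.

Lemma H'_mono u v : 0 <= u -> u <= v -> H' u <= H' v.
Proof.
hy; move=> u0 uv; have a0 := a_gt0.
rewrite /H'; case: ifPn => ua; case: ifPn => va; rewrite ?ltNge -?ltNge in ua va.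
- by rewrite ler_pM2r // invr_gt0; lra.
- by rewrite ler_pdivrMr; lra.
- lra.
- lra.
Qed.

Lemma H'_lip u v : 0 <= u -> u <= v -> H' v - H' u <= (v - u) / (2 * a).
Proof.
hy; move=> u0 uv; have a0 := a_gt0.
rewrite /H'; case: ifPn => va; case: ifPn => ua; rewrite ?ltNge -?ltNge in ua va.
- by rewrite mulrBl.
- lra.
- have -> : 1 / 2 - u / (2 * a) = (a - u) / (2 * a) by field; lra.
  by rewrite ler_pM2r ?invr_gt0; lra.
- rewrite subrr; apply: divr_ge0; lra.
Qed.

Lemma H'_le u : 0 <= u -> H' u <= 1/2.
Proof.
hy; move=> u0; have a0 := a_gt0; rewrite /H'; case: ifPn => ua; last lra.
by rewrite ler_pdivrMr; lra.
Qed.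

Lemma H_mono u v : 0 <= u -> u <= v -> H u <= H v.
Proof.
move=> u0 uv; have := H_tangent _ _ u0 (le_trans u0 uv); have := H'_ge0 _ u0.
nra.
Qed.

Lemma expR_tan (x y : R) : expR x * (1 + (y - x)) <= expR y.
Proof.
have e : expR y = expR x * expR (y - x) by rewrite -expRD addrC subrK.
rewrite e; apply: ler_wpM2l; [exact: expR_ge0 | exact: expR_ge1Dx].
Qed.

Lemma cc_gt0 : 0 < cc. Proof. exact: expR_gt0. Qed.
Lemma cc_le1 : cc <= 1. Proof. hy; rewrite /cc expR_le1; lra. Qed.

Lemma gg_ge0 u : 0 <= u -> 0 <= gg u.
Proof.
move=> u0; rewrite /gg; apply: mulr_ge0; last exact: H'_ge0.
by apply: mulr_ge0; [exact: ltW cc_gt0 | exact: expR_ge0].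
Qed.

Lemma gg0 : gg 0 = 0.
Proof. hy; rewrite /gg /H' ifT; last lra. by rewrite mul0r mulr0. Qed.

Lemma claimC u v : 0 <= u -> u <= v ->
  (v - u) / (2 * a) <= H' v - H' u + (H v - H u) * H' v.
Proof.
hy; move=> u0 uv; have a0 := a_gt0.
have Hm := H_mono _ _ u0 uv.
rewrite /H' /H; case: ifPn => va; case: ifPn => ua; rewrite ?ltNge -?ltNge in ua va.
- have : 0 <= (v ^+ 2 / (4 * a) - u ^+ 2 / (4 * a)) * (v / (2 * a)).
    apply: mulr_ge0; last by apply: divr_ge0; lra.
    by rewrite -mulrBl; apply: mulr_ge0; [nra | rewrite invr_ge0; lra].
  rewrite mulrBl; lra.
- lra.
- (* u <= a < v *)
  have e1 : (v / 2 - a / 4 - u ^+ 2 / (4 * a)) >= (v - a) / 2.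
    have : u ^+ 2 / (4 * a) <= a / 4.
      rewrite ler_pdivrMr; last lra. nra.
    lra.
  have e2 : (v - a) / 4 >= (v - a) / (2 * a).
    rewrite ler_pdivrMr; last lra. nra.
  have e3 : (1 / 2 - u / (2 * a)) = (a - u) / (2 * a) by field; lra.
  rewrite e3.
  have e4 : (v - u) / (2 * a) = (a - u) / (2 * a) + (v - a) / (2 * a) by field; lra.
  rewrite e4; lra.
- have e2 : (v - u) / 4 >= (v - u) / (2 * a).
    rewrite ler_pdivrMr; last lra. nra.
  lra.
Qed.


Lemma gg_lowlip u v : 0 <= u -> u <= v -> cc / (2 * a) * (v - u) <= gg v - gg u.
Proof.
hy; move=> u0 uv; have a0 := a_gt0; have v0 : 0 <= v by lra.
have c0 := cc_gt0.
have hC := claimC _ _ u0 uv.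
have Et := expR_tan (H u) (H v).
have Eu1 : 1 <= expR (H u) by have := expR_ge1Dx (H u); have := H_ge0 _ u0; lra.
have h'v := H'_ge0 _ v0; have h'u := H'_ge0 _ u0.
rewrite /gg.
set Eu := expR (H u) in Et Eu1 *; set Ev := expR (H v) in Et *.
set X := H' v - H' u + (H v - H u) * H' v in hC.
have s1 : cc * (Eu * X) <= cc * Ev * H' v - cc * Eu * H' u.
  rewrite /X; have := ler_wpM2r h'v Et. 
  have := ltW c0. nra.
have s2 : cc * ((v - u) / (2 * a)) <= cc * (Eu * X).
  apply: ler_wpM2l; first lra.
  have : 0 <= (v - u) / (2 * a) by apply: divr_ge0; lra.
  nra.
have -> : cc / (2 * a) * (v - u) = cc * ((v - u) / (2 * a)) by field; lra.
lra.
Qed.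

Lemma expR_quarter : expR (1/4 : R) <= 4/3.
Proof.
have h1 := expR_ge1Dx (- (1/4) : R).
have h2 : expR (1/4 : R) * expR (- (1/4)) = 1 by rewrite -expRD subrr expR0.
have := expR_gt0 (1/4 : R). nra.
Qed.

Lemma gg_uplip u v : 0 <= u -> u <= v -> gg v - gg u <= Num.max 1 (gg v) * (v - u).
Proof.
hy; move=> u0 uv; have a0 := a_gt0; have v0 : 0 <= v by lra.
have c0 := cc_gt0; have c1 := cc_le1.
have Et := expR_tan (H v) (H u).
have Ev1 : 1 <= expR (H v) by have := expR_ge1Dx (H v); have := H_ge0 _ v0; lra.
have h'v := H'_ge0 _ v0; have h'u := H'_ge0 _ u0.
have hL := H'_lip _ _ u0 uv.
have hT := H_tangent _ _ v0 u0.
have hM := H'_mono _ _ u0 uv.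
rewrite /gg.
set Eu := expR (H u) in Et *; set Ev := expR (H v) in Et Ev1 *.
have s1 : cc * Ev * H' v - cc * Eu * H' u <= cc * Ev * (H' v - H' u + (H v - H u) * H' u).
  have := ler_wpM2r h'u Et; have := ltW c0; nra.
have s2 : H' v - H' u + (H v - H u) * H' u <= (v - u) * (1 / (2 * a) + H' v ^+ 2).
  have t1 : (H v - H u) * H' u <= H' v * (v - u) * H' u by apply: ler_wpM2r => //; lra.
  have t2 : H' v * (v - u) * H' u <= H' v * (v - u) * H' v.
    apply: ler_wpM2l => //; apply: mulr_ge0 => //; lra.
  have -> : (v - u) * (1 / (2 * a) + H' v ^+ 2) = (v - u) / (2 * a) + H' v * (v - u) * H' v.
    by field; lra.
  lra.
have s3 : cc * Ev * (1 / (2 * a) + H' v ^+ 2) <= Num.max 1 (cc * Ev * H' v).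
  rewrite /H' in h'v hM hL s2 *.
  case: ifPn => va; rewrite ?ltNge -?ltNge in va.
  - have [v2|v2] := lerP 2 v.
      rewrite le_max; apply/orP; right; apply: ler_wpM2l; first by apply: mulr_ge0; lra.
      have : (v - 2) * (v - a) <= 0 by nra.
      rewrite -subr_ge0.
      have -> : v / (2 * a) - (1 / (2 * a) + (v / (2 * a)) ^+ 2) = - (v ^+ 2 - 2 * a * v + 2 * a) / (4 * a ^+ 2) by field; lra.
      move=> h; apply: divr_ge0; last by have := sqr_ge0 a; nra.
      nra.
    rewrite le_max; apply/orP; left.
    have hE : Ev <= 4/3.
      apply: le_trans expR_quarter; rewrite /Ev /H ifT //; rewrite ler_expR.
      rewrite ler_pdivrMr; last lra. nra.
    have hh : 1 / (2 * a) + (v / (2 * a)) ^+ 2 <= 3/16.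
      have e1 : 1 / (2 * a) <= 1/8 by rewrite ler_pdivrMr; lra.
      have e2 : v / (2 * a) <= 1/4 by rewrite ler_pdivrMr; lra.
      have e3 : 0 <= v / (2 * a) by apply: divr_ge0; lra.
      nra.
    have : 0 <= 1 / (2 * a) + (v / (2 * a)) ^+ 2.
      apply: addr_ge0; [apply: divr_ge0; lra | exact: sqr_ge0].
    have : 0 <= Ev by exact: expR_ge0.
    move=> ? ?; have hce : cc * Ev <= 4/3 by nra.
    have : 0 <= cc * Ev by apply: mulr_ge0; lra.
    nra.
  - rewrite le_max; apply/orP; right; apply: ler_wpM2l; first by apply: mulr_ge0; lra.
    have : 1 / (2 * a) <= 1/4 by rewrite ler_pdivrMr; lra.
    lra.
have s4 : 0 <= v - u by lra.
have := ler_wpM2r s4 s3.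
have : 0 <= cc * Ev by apply: mulr_ge0; lra.
nra.
Qed.


Lemma gg_surj x : 0 <= x -> exists2 th, 0 <= th & gg th = x.
Proof.
hy; move=> x0; have a0 := a_gt0; have c0 := cc_gt0.
pose f := fun u : R => cc * expR (u ^+ 2 / (4 * a)) * (u / (2 * a)).
have fa : f a = cc * expR (a / 4) / 2.
  rewrite /f; have -> : a ^+ 2 / (4 * a) = a / 4 by field; lra.
  have -> : a / (2 * a) = 1 / 2 by field; lra.
  by rewrite mul1r.
have [xs|xl] := lerP x (cc * expR (a / 4) / 2).
  have cf : continuous f.
    move=> u; apply: cvgM; last by apply: cvgMl; exact: cvg_id.
    apply: cvgMr; apply: continuous_comp; last exact: continuous_expR.
    by apply: cvgMl; apply: cvgM; exact: cvg_id.
  have f0 : f 0 = 0 by rewrite /f mul0r mulr0.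
  have fa0 : 0 <= f a by rewrite fa; apply: divr_ge0; [apply: mulr_ge0; [lra|exact: expR_ge0] | lra].
  have hv : Num.min (f 0) (f a) <= x <= Num.max (f 0) (f a).
    by rewrite f0 (min_l fa0) (max_r fa0) x0 /= fa.
  have [th thin fth] := @IVT R f 0 a x (ltW a0) (continuous_subspaceT cf) hv.
  move: thin; rewrite in_itv /= => /andP [th0 tha].
  exists th => //; rewrite /gg /H /H' tha; exact: fth.
have hE := expR_gt0 (a / 4).
have hce : 0 < cc * expR (a / 4) / 2 by apply: divr_gt0; [apply: mulr_gt0|]; lra.
have hx : 0 < 2 * x / cc by apply: divr_gt0; lra.
have [y ey] := expR_total hx.
exists (2 * y + a / 2).
  have : a / 4 < y.
    rewrite -ltr_expR ey ltr_pdivlMr // (mulrC 2); rewrite ltr_pdivrMr // in xl.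
    lra.
  lra.
have hy : a < 2 * y + a / 2.
  have : a / 4 < y.
    rewrite -ltr_expR ey ltr_pdivlMr // (mulrC 2); rewrite ltr_pdivrMr // in xl.
    lra.
  lra.
have nle : (2 * y + a / 2 <= a) = false by apply/negbTE; rewrite -ltNge.
rewrite /gg /H /H' nle.
have -> : (2 * y + a / 2) / 2 - a / 4 = y by field.
rewrite ey; have cn : cc != 0 by lra.
by field.
Qed.

Lemma psistar_tangent th u : 0 <= u ->
  cc * expR (H u) + gg u * (th - u) <= psistar th (Num.sqrt a) Q.
Proof.
move=> u0; rewrite psistar_eq.
have t0 : 0 <= `|th| by exact: normr_ge0.
have hT := H_tangent _ _ u0 t0.
have Et := expR_tan (H u) (H `|th|).
have h'u := H'_ge0 _ u0.
have c0 := cc_gt0.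
have ggu := gg_ge0 _ u0.
have : th <= `|th| by exact: ler_norm.
rewrite /gg.
have E0 := expR_ge0 (H u).
have s1 : expR (H u) * (1 + H' u * (`|th| - u)) <= expR (H `|th|).
  apply: le_trans Et; apply: ler_wpM2l => //; lra.
move=> tt.
have s2 : cc * expR (H u) * H' u * (th - u) <= cc * expR (H u) * H' u * (`|th| - u).
  apply: ler_wpM2l; last lra. by rewrite /gg in ggu.
have s3 : cc * (expR (H u) * (1 + H' u * (`|th| - u))) <= cc * expR (H `|th|).
  by apply: ler_wpM2l => //; lra.
have e : cc * expR (H u) * H' u * (`|th| - u) = cc * (expR (H u) * (1 + H' u * (`|th| - u))) - cc * expR (H u).
  by ring.
rewrite e in s2.
lra.
Qed.

Lemma psi_eq x th : 0 <= th -> gg th = x ->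
  psi x (Num.sqrt a) Q = th * x - cc * expR (H th).
Proof.
move=> th0 gth; rewrite /psi; apply: sup_eq_max.
  exists th => //; rewrite psistar_eq ger0_norm //.
move=> y [th' _ <-].
have := psistar_tangent th' _ th0; rewrite gth; lra.
Qed.




Definition thet (x : R) : R := xget 0 (fun th => 0 <= th /\ gg th = x).

Lemma thetP x : 0 <= x -> 0 <= thet x /\ gg (thet x) = x.
Proof.
move=> x0; rewrite /thet; apply: (@xgetPex _ 0 (fun th : R => 0 <= th /\ gg th = x)).
by have [th th0 gth] := gg_surj _ x0; exists th.
Qed.

Definition FF x := psi x (Num.sqrt a) Q.

Lemma FF_eq x : 0 <= x -> FF x = thet x * x - cc * expR (H (thet x)).
Proof. by move=> x0; have [t0 gt] := thetP _ x0; rewrite /FF (psi_eq _ _ t0 gt). Qed.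

Lemma FF_sub x y : 0 <= x -> 0 <= y -> FF x + thet x * (y - x) <= FF y.
Proof.
move=> x0 y0; rewrite !FF_eq //.
have [tx0 gx] := thetP _ x0; have [ty0 gy] := thetP _ y0.
have := psistar_tangent (thet x) _ ty0; rewrite psistar_eq ger0_norm // gy.
have := psistar_tangent (thet y) _ tx0; rewrite psistar_eq ger0_norm // gx.
nra.
Qed.

Definition Kc := 2 * a / cc.

Lemma thet_mono x y : 0 <= x -> x <= y -> thet x <= thet y.
Proof.
hy; move=> x0 xy; have y0 : 0 <= y by lra.
have [tx0 gx] := thetP _ x0; have [ty0 gy] := thetP _ y0.
rewrite leNgt; apply/negP => lt.
have := gg_lowlip _ _ ty0 (ltW lt); rewrite gx gy.
have : 0 < cc / (2 * a) * (thet x - thet y).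
  apply: mulr_gt0; last lra.
  apply: divr_gt0; [exact: cc_gt0 | have := a_gt0; lra].
lra.
Qed.

Lemma thet_lip x y : 0 <= x -> x <= y -> thet y - thet x <= Kc * (y - x).
Proof.
hy; move=> x0 xy; have y0 : 0 <= y by lra.
have [tx0 gx] := thetP _ x0; have [ty0 gy] := thetP _ y0.
have := gg_lowlip _ _ tx0 (thet_mono _ _ x0 xy); rewrite gx gy.
have a0 := a_gt0; have c0 := cc_gt0.
rewrite /Kc.
have -> : cc / (2 * a) * (thet y - thet x) = (thet y - thet x) / (2 * a / cc).
  have cn : cc != 0 by lra. have an : a != 0 by lra. by field; rewrite cn an.
rewrite ler_pdivrMr; last by apply: divr_gt0; lra.
by rewrite mulrC.
Qed.

Lemma thet_low x y : 0 <= x -> x <= y -> y - x <= Num.max 1 y * (thet y - thet x).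
Proof.
hy; move=> x0 xy; have y0 : 0 <= y by lra.
have [tx0 gx] := thetP _ x0; have [ty0 gy] := thetP _ y0.
by have := gg_uplip _ _ tx0 (thet_mono _ _ x0 xy); rewrite gx gy.
Qed.

Lemma thet0 : thet 0 = 0.
Proof.
have [t0 g0] := thetP _ (lexx 0).
apply/le_anti/andP; split => //.
have := gg_lowlip _ _ (lexx 0) t0; rewrite g0 gg0 subrr subr0.
have : 0 < cc / (2 * a) by apply: divr_gt0; [exact: cc_gt0| have := a_gt0; lra].
nra.
Qed.

Definition DD r s := FF s - FF r - thet r * (s - r).

Lemma DD_ge0 r s : 0 <= r -> 0 <= s -> 0 <= DD r s.
Proof. move=> r0 s0; have := FF_sub _ _ r0 s0; rewrite /DD; lra. Qed.

Lemma DD_up r s : 0 <= r -> 0 <= s -> DD r s <= Kc * (s - r) ^+ 2.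
Proof.
move=> r0 s0.
have h1 : DD r s <= (thet s - thet r) * (s - r).
  have := FF_sub _ _ s0 r0; rewrite /DD; lra.
apply: le_trans h1 _.
have [rs|sr] := lerP r s.
  have := thet_lip _ _ r0 rs; have := thet_mono _ _ r0 rs.
  have : 0 <= s - r by lra.
  nra.
have := thet_lip _ _ s0 (ltW sr); have := thet_mono _ _ s0 (ltW sr).
have : 0 <= r - s by lra.
nra.
Qed.

Lemma DD_low r s : 0 <= r -> 0 <= s ->
  (s - r) ^+ 2 <= 4 * Num.max 1 (Num.max r s) * DD r s.
Proof.
move=> r0 s0; set w := (r + s) / 2.
have w0 : 0 <= w by rewrite /w; lra.
have h1 : (thet w - thet r) * (w - r) <= DD r s.
  have := FF_sub _ _ w0 s0; have := FF_sub _ _ r0 w0; rewrite /DD.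
  have -> : s - w = w - r by rewrite /w; field.
  have e1 : thet r * (s - r) = 2 * (thet r * (w - r)) by rewrite /w; field.
  have e2 : (thet w - thet r) * (w - r) = thet w * (w - r) - thet r * (w - r) by ring.
  rewrite e1 e2; lra.
set L := Num.max 1 (Num.max r s).
have L1 : 1 <= L by exact: mymaxl.
have e : (s - r) ^+ 2 = 4 * (w - r) ^+ 2 by rewrite /w; field.
rewrite e.
suff : (w - r) ^+ 2 <= L * ((thet w - thet r) * (w - r)).
  have : 0 <= L by lra. nra.
have [rs|sr] := lerP r s.
  have rw : r <= w by rewrite /w; lra.
  have := thet_low _ _ r0 rw.
  have hL : Num.max 1 w <= L.
    rewrite /L ge_max !le_max lexx /=; apply/orP; right; apply/orP; right; rewrite /w; lra.
  have := thet_mono _ _ r0 rw.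
  have : 0 <= w - r by lra.
  move=> p1 p2 p3.
  have q1 := ler_wpM2l p1 p3.
  have q2 : (w - r) * (Num.max 1 w * (thet w - thet r)) <= (w - r) * (L * (thet w - thet r)).
    apply: ler_wpM2l => //; apply: ler_wpM2r => //; lra.
  have -> : L * ((thet w - thet r) * (w - r)) = (w - r) * (L * (thet w - thet r)) by ring.
  rewrite expr2; lra.
have wr : w <= r by rewrite /w; lra.
have := thet_low _ _ w0 wr.
have hL : Num.max 1 r <= L.
  by rewrite /L ge_max !le_max !lexx /= orbT.
have := thet_mono _ _ w0 wr.
have : 0 <= r - w by lra.
move=> p1 p2 p3.
have q1 := ler_wpM2l p1 p3.
have q2 : (r - w) * (Num.max 1 r * (thet r - thet w)) <= (r - w) * (L * (thet r - thet w)).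
  apply: ler_wpM2l => //; apply: ler_wpM2r => //; lra.
have -> : L * ((thet w - thet r) * (w - r)) = (r - w) * (L * (thet r - thet w)) by ring.
have -> : (w - r) ^+ 2 = (r - w) * (r - w) by ring.
lra.
Qed.

End OneD.


Section Vec.
Variables (R : realType) (d : nat).
Implicit Types u v w h : 'rV[R]_d.

Lemma dotvC u v : dotv u v = dotv v u.
Proof. by apply: eq_bigr => i _; rewrite mulrC. Qed.

Lemma dotvDr u v w : dotv u (v + w) = dotv u v + dotv u w.
Proof. by rewrite /dotv -big_split; apply: eq_bigr => i _; rewrite mxE mulrDr. Qed.

Lemma dotvZr u v (k : R) : dotv u (k *: v) = k * dotv u v.
Proof. by rewrite /dotv mulr_sumr; apply: eq_bigr => i _; rewrite mxE mulrCA. Qed.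

Lemma dotvDl u v w : dotv (v + w) u = dotv v u + dotv w u.
Proof. by rewrite dotvC dotvDr !(dotvC u). Qed.

Lemma dotvZl u v (k : R) : dotv (k *: v) u = k * dotv v u.
Proof. by rewrite dotvC dotvZr dotvC. Qed.

Lemma dotv_ge0 u : 0 <= dotv u u.
Proof. by apply: sumr_ge0 => i _; rewrite -expr2 sqr_ge0. Qed.

Lemma enorm_sq u : enorm u ^+ 2 = dotv u u.
Proof. by rewrite /enorm sqr_sqrtr // dotv_ge0. Qed.

Lemma enorm_ge0 u : 0 <= enorm u.
Proof. exact: sqrtr_ge0. Qed.

Lemma dotv0 u : dotv u u = 0 -> forall v, dotv u v = 0.
Proof.
move=> h0 v.
have H0 : forall i : 'I_d, true -> 0 <= u ord0 i * u ord0 i.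
  by move=> i _; rewrite -expr2 sqr_ge0.
have := psumr_eq0P H0 h0 => Hi.
rewrite /dotv big1 // => i _.
have /eqP := Hi i isT; rewrite mulf_eq0 orbb => /eqP ->; by rewrite mul0r.
Qed.

Lemma CS u v : dotv u v <= enorm u * enorm v.
Proof.
set A := dotv u u; set B := dotv v v; set C := dotv u v.
have A0 : 0 <= A by exact: dotv_ge0.
have B0 : 0 <= B by exact: dotv_ge0.
have [Cn|Cp] := lerP C 0.
  by apply: le_trans Cn _; apply: mulr_ge0; exact: enorm_ge0.
suff : C ^+ 2 <= A * B.
  move=> h; rewrite /enorm -/A -/B -sqrtrM // -(ger0_norm (ltW Cp)) -sqrtr_sqr.
  by rewrite ler_sqrt // mulr_ge0.
have [Bz|Bp] := eqVneq B 0.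
  by rewrite /C dotvC (dotv0 _ Bz) expr0n /= Bz mulr0.
have key := dotv_ge0 (B *: u - C *: v).
have e : dotv (B *: u - C *: v) (B *: u - C *: v) = B * (B * A - C ^+ 2).
  rewrite -[- (C *: v)]scaleNr !(dotvDl, dotvDr, dotvZl, dotvZr).
  rewrite -/A -/B -/C (dotvC v u) -/C; ring.
rewrite e in key.
have Bp' : 0 < B by rewrite lt0r Bp B0.
have : 0 <= B * A - C ^+ 2 by rewrite -(pmulr_rge0 _ Bp').
nra.
Qed.

Lemma enormD2 u v : enorm (u + v) ^+ 2 = enorm u ^+ 2 + 2 * dotv u v + enorm v ^+ 2.
Proof. rewrite !enorm_sq dotvDl !dotvDr (dotvC v u); ring. Qed.

Lemma coord_le h (i : 'I_d) : `|h ord0 i| <= `|h|.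
Proof.
have /mapP[j Hj ->] : `|h ord0 i| \in [seq `|h x.1 x.2| | x : 'I_1 * 'I_d].
  by apply/mapP; exists (ord0, i) => //=; rewrite mem_enum.
by rewrite [leRHS]/Num.norm /= mx_normrE; apply/bigmax_geP; right => /=; exists j.
Qed.

Lemma dotv_le h : dotv h h <= d%:R * `|h| ^+ 2.
Proof.
rewrite /dotv mulr_natl -[in X in _ *+ X](card_ord d) -sumr_const.
apply: ler_sum => i _; rewrite -expr2 -real_normK ?num_real //.
by rewrite lerXn2r ?nnegrE ?normr_ge0 // coord_le.
Qed.



Lemma dotv_abs v h : `|dotv v h| <= (\sum_(i < d) `|v ord0 i|) * `|h|.
Proof.
rewrite /dotv mulr_suml; apply: le_trans (ler_norm_sum _ _ _) _.
apply: ler_sum => i _; rewrite normrM; apply: ler_wpM2l => //; exact: coord_le.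
Qed.

End Vec.

Section Lin.
Variables (R : realType) (d : nat) (k : R) (v : 'rV[R]_d).
Definition lfun : 'rV[R]_d -> R^o := fun h => k * dotv v h.
Lemma lfun_linear : linear_for *:%R lfun.
Proof.
move=> a x y; rewrite /lfun dotvDr dotvZr /=.
by rewrite /GRing.scale /= mulrDr mulrCA.
Qed.
HB.instance Definition _ := GRing.isLinear.Build R 'rV[R]_d R^o *:%R lfun lfun_linear.

Lemma lfun_cont : continuous lfun.
Proof.
apply: bounded_linear_continuous; apply/linear_boundedP.
exists (`|k| * \sum_(i < d) `|v ord0 i|); split; first exact: num_real.
move=> r hr x; rewrite /lfun normrM.
apply: le_trans (_ : `|k| * ((\sum_(i < d) `|v ord0 i|) * `|x|) <= _).
  by apply: ler_wpM2l => //; exact: dotv_abs.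
rewrite mulrA; apply: ler_wpM2r => //; exact: ltW.
Qed.
End Lin.

Lemma diff_from_bound (R : realType) (d : nat) (f : 'rV[R]_d -> R^o) x
  (df : {linear 'rV[R]_d -> R^o}) (C : R) :
  0 <= C -> continuous df ->
  (forall h, `|f (h + x) - f x - df h| <= C * dotv h h) ->
  'd f x = df :> ('rV[R]_d -> R^o).
Proof.
move=> C0 dfc hb; apply: diff_unique => //.
apply/eqaddoP => eps eps0 /=.
set P := fun h : 'rV[R]_d => `|f (h + x) - f x - df h| <= eps * `|h|.
suff : \forall h \near (0 : 'rV[R]_d), P h.
  apply: filterS => h; rewrite /P !fctE /= /cst /=.
  by rewrite opprD addrA.
apply/nbhs_norm0P; exists (eps / (C * d%:R + 1)).
  by apply: divr_gt0 => //; apply: ltr_pwDr => //; apply: mulr_ge0.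
move=> h /= hh; rewrite /P.
apply: le_trans (hb h) _.
have hd := @dotv_le R d h.
have n0 : 0 <= `|h| by exact: normr_ge0.
have he : `|h| * (C * d%:R + 1) <= eps.
  by rewrite -ler_pdivlMr; [exact: ltW | apply: ltr_pwDr => //; apply: mulr_ge0].
have : 0 <= C * d%:R by apply: mulr_ge0.
move=> ?.
have s1 : C * dotv h h <= C * (d%:R * `|h| ^+ 2) by exact: ler_wpM2l.
apply: le_trans s1 _.
have s2 : C * (d%:R * `|h| ^+ 2) <= `|h| * (C * d%:R + 1) * `|h|.
  rewrite expr2; have : 0 <= `|h| * `|h| by exact: mulr_ge0.
  nra.
apply: le_trans s2 _; exact: ler_wpM2r.
Qed.


Lemma Ssq_ge4 (R : realType) d (g : nat -> 'rV[R]_d) eta n : 4 <= Ssq g eta n.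
Proof.
elim: n => [|n IH] /=; first by [].
have := sqr_ge0 (enorm (eta n.+1 *: g n.+1)); lra.
Qed.

Lemma Qv_ge0 (R : realType) d (g : nat -> 'rV[R]_d) eta n : 0 <= Qv g eta n.
Proof.
elim: n => [|n IH] /=; first by [].
apply: addr_ge0 => //; apply: divr_ge0; first exact: sqr_ge0.
have := Ssq_ge4 _ _ g eta n.+1; rewrite /=; lra.
Qed.

Lemma min1inv_max (R : realType) (M : R) : 0 <= M -> min1inv M * Num.max 1 M = 1.
Proof.
move=> M0; rewrite /min1inv; have [->|Mn] := eqVneq M 0.
  by rewrite max_l ?mul1r.
have Mp : 0 < M by rewrite lt0r Mn M0.
rewrite /=.
have [M1|M1] := lerP M 1.
  rewrite mulr1 min_l //.
  by rewrite -[1]invr1 lef_pV2 ?posrE.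
rewrite min_r ?mulVf //.
by rewrite -[1]invr1 lef_pV2 ?posrE // ltW.
Qed.

Theorem lemma19 (R : realType) (d : nat) (g : nat -> 'rV[R]_d) (eta : nat -> R)
  (eta_ge0 : forall s, 0 <= eta s) (t : nat) (ht : (1 <= t)%N) (xt : 'rV[R]_d)
  (xt_min : forall y : 'rV[R]_d,
     phi g eta t xt - dotv (thetav g eta t.-1) xt <= phi g eta t y - dotv (thetav g eta t.-1) y)
  (xstar : 'rV[R]_d) :
  exists xtil : R,
    Num.min (enorm xstar) (enorm xt) <= xtil <= Num.max (enorm xstar) (enorm xt) /\
    enorm (xstar - xt) ^+ 2 / (Sv g eta t.-1 + 2) * min1inv xtil
      <= bregman (phi g eta t) xstar xt /\
    bregman (phi g eta t) xstar xt
      <= 2 * enorm (xstar - xt) ^+ 2 * (Sv g eta t.-1 ^+ 2 + Qv g eta t.-1)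
           * expR (Qv g eta t.-1).
Proof.
set a := Ssq g eta t.-1; set Q := Qv g eta t.-1.
have ha : 4 <= a by exact: Ssq_ge4.
have hQ : 0 <= Q by exact: Qv_ge0.
have Sva : Sv g eta t.-1 = Num.sqrt a by [].
have phiE : forall x, phi g eta t x = FF _ a Q (enorm x) by [].
set r := enorm xt.
have r0 : 0 <= r by exact: enorm_ge0.
set k := thet _ a Q r / r.
have Kc0 : 0 < Kc _ a Q.
  rewrite /Kc; apply: divr_gt0; [lra | exact: expR_gt0].
have thr : thet _ a Q r = k * r.
  have [->|rn] := eqVneq r 0; first by rewrite (thet0 _ _ _ ha hQ) mulr0.
  by rewrite /k divfK.
have k0 : 0 <= k.
  by rewrite /k; apply: divr_ge0 => //; have [] := thetP _ _ _ ha hQ _ r0.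
have kK : k <= Kc _ a Q.
  have [rz|rn] := eqVneq r 0; first by rewrite /k rz invr0 mulr0; exact: ltW.
  have rp : 0 < r by rewrite lt0r rn r0.
  have := thet_lip _ _ _ ha hQ _ _ (lexx 0) r0; rewrite (thet0 _ _ _ ha hQ) subr0 subr0.
  by rewrite /k ler_pdivrMr.
have Eid : forall h, let s := enorm (h + xt) in
  let Y := 2 * (r * s - r ^+ 2 - dotv xt h) in
  [/\ phi g eta t (h + xt) - phi g eta t xt - k * dotv xt h = DD _ a Q r s + k * Y / 2,
      0 <= Y, Y <= dotv h h, dotv h h = (s - r) ^+ 2 + Y & 0 <= s].
  move=> h s Y.
  have s0 : 0 <= s by exact: enorm_ge0.
  have e2 : s ^+ 2 = dotv h h + 2 * dotv xt h + r ^+ 2.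
    by rewrite /s enormD2 enorm_sq (dotvC _ _ h xt).
  have cs : dotv xt (h + xt) <= r * s by exact: CS.
  rewrite dotvDr -enorm_sq -/r in cs.
  have e3 : dotv h h = s ^+ 2 - 2 * dotv xt h - r ^+ 2 by rewrite e2; ring.
  split.
  - rewrite !phiE -/s -/r /DD thr /Y; field; lra.
  - rewrite /Y; lra.
  - rewrite /Y; have := sqr_ge0 (s - r).
    have -> : (s - r) ^+ 2 = s ^+ 2 - 2 * (r * s) + r ^+ 2 by ring.
    move: e3; lra.
  - rewrite /Y; move: e3; set z := dotv h h; move=> ->; ring.
  - exact: s0.
pose df := lfun _ _ k xt.
have dE : 'd (phi g eta t) xt = df :> ('rV[R]_d -> R^o).
  apply: (@diff_from_bound _ _ _ _ _ (Kc _ a Q)); first exact: ltW.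
    exact: lfun_cont.
  move=> h; have [E1 Y0 Yh hh s0] := Eid h.
  rewrite /df /lfun /= E1.
  set s := enorm (h + xt) in E1 Y0 Yh hh s0 *.
  set Y := 2 * (r * s - r ^+ 2 - dotv xt h) in E1 Y0 Yh hh s0 *.
  have D0 := DD_ge0 _ _ _ ha hQ _ _ r0 s0.
  have Du := DD_up _ _ _ ha hQ _ _ r0 s0.
  rewrite ger0_norm; last by have := mulr_ge0 k0 Y0; lra.
  rewrite hh.
  have : k * Y <= Kc _ a Q * Y by apply: ler_wpM2r.
  rewrite mulrDr; have := mulr_ge0 (ltW Kc0) Y0; lra.
exists (Num.max (enorm xstar) (enorm xt)); split.
  apply/andP; split; last exact: lexx.
  by rewrite ge_min le_max lexx.
have dE' := congr1 (fun F => F (xstar - xt)) dE.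
rewrite /bregman dE' /= /df /lfun.
have [E1 Y0 Yh hh s0] := Eid (xstar - xt).
rewrite subrK in E1 s0 Yh hh Y0 *.
rewrite E1 enorm_sq.
set s := enorm xstar in E1 Y0 Yh hh s0 *.
set Y := 2 * (r * s - r ^+ 2 - dotv xt (xstar - xt)) in E1 Y0 Yh hh s0 *.
set hv := dotv (xstar - xt) (xstar - xt) in Yh hh *.
have D0 := DD_ge0 _ _ _ ha hQ _ _ r0 s0.
have Du := DD_up _ _ _ ha hQ _ _ r0 s0.
have Dl := DD_low _ _ _ ha hQ _ _ r0 s0.
rewrite -/r -/s.
set M := Num.max s r.
have M0 : 0 <= M by rewrite le_max s0.
have mL := min1inv_max _ _ M0.
set m := min1inv M in mL *.
have L1 : 1 <= Num.max 1 M by rewrite le_max lexx.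
have m0 : 0 <= m.
  have : 0 < m * Num.max 1 M by rewrite mL.
  by rewrite pmulr_lgt0 ?(lt_le_trans ltr01 L1) // => /ltW.
have S2 : 2 <= Sv g eta t.-1.
  rewrite Sva -[2]ger0_norm // -sqrtr_sqr ler_sqrt //; lra.
split.
- set T := Sv g eta t.-1 + 2.
  have T4 : 4 <= T by rewrite /T; lra.
  rewrite mulrAC ler_pdivrMr; last lra.
  have LM : Num.max 1 (Num.max r s) = Num.max 1 M by rewrite /M (maxC s r).
  rewrite LM in Dl.
  have q1 : m * (s - r) ^+ 2 <= 4 * DD _ a Q r s.
    have := ler_wpM2l m0 Dl.
    have e : m * (4 * Num.max 1 M * DD _ a Q r s) = 4 * DD _ a Q r s * (m * Num.max 1 M) by ring.
    by rewrite e mL mulr1.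
  have q2 : m * Y <= k * Y.
    have [rz|rn] := eqVneq r 0.
      have xz : dotv xt xt = 0 by rewrite -enorm_sq -/r rz expr0n.
      have Yz : Y = 0 by rewrite /Y rz (dotv0 _ _ _ xz) !(mul0r, expr0n, subrr) /=; lra.
      by rewrite Yz !mulr0.
    apply: ler_wpM2r => //.
    have rp : 0 < r by rewrite lt0r rn r0.
    have := thet_low _ _ _ ha hQ _ _ (lexx 0) r0.
    rewrite (thet0 _ _ _ ha hQ) !subr0 thr.
    have hr : Num.max 1 r <= Num.max 1 M.
      by rewrite ge_max !le_max !lexx /= !orbT.
    move=> h1.
    have h2 : 1 <= Num.max 1 r * k.
      by rewrite -(ler_pM2r rp) mul1r -mulrA.
    have h3 : 1 <= Num.max 1 M * k.
      apply: le_trans h2 _; apply: ler_wpM2r => //.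
    have := ler_wpM2l m0 h3; rewrite mulr1 mulrA mL mul1r //.
  have e4 : 4 * (DD _ a Q r s + k * Y / 2) <= T * (DD _ a Q r s + k * Y / 2).
    apply: ler_wpM2r => //; have := mulr_ge0 k0 Y0; lra.
  rewrite (mulrC _ T).
  have e5 : hv * m = m * (s - r) ^+ 2 + m * Y by rewrite hh; ring.
  rewrite e5.
  have := mulr_ge0 m0 Y0.
  have e6 : 4 * (DD _ a Q r s + k * Y / 2) = 4 * DD _ a Q r s + 2 * (k * Y) by field; lra.
  rewrite e6 in e4.
  lra.
- rewrite -/Q.
  have hv0 : 0 <= hv by rewrite /hv; exact: dotv_ge0.
  have up : DD _ a Q r s + k * Y / 2 <= Kc _ a Q * hv.
    rewrite hh mulrDr; have := mulr_ge0 (ltW Kc0) Y0.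
    have : k * Y <= Kc _ a Q * Y by apply: ler_wpM2r.
    lra.
  apply: le_trans up _.
  rewrite /Kc /cc expRN invrK Sva sqr_sqrtr; last lra.
  have eQ := expR_gt0 Q.
  have : 0 <= hv * expR Q * Q by apply: mulr_ge0 => //; apply: mulr_ge0 => //; exact: ltW.
  have -> : 2 * a * expR Q * hv = 2 * hv * a * expR Q by ring.
  have -> : 2 * hv * (a + Q) * expR Q = 2 * hv * a * expR Q + 2 * (hv * expR Q * Q) by ring.
  lra.
Qed.
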